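(* Let $\mathcal G=(\mathcal V,\mathcal E)$ be a finite undirected graph, and let $\mathcal V_c\subseteq\mathcal V$ and $\mathcal V_a=\mathcal V\setminus\mathcal V_c$. Let $u$ be the mixed network coordination/anti-coordination game with set of coordinating players $\mathcal V_c$ and set of anti-coordinating players $\mathcal V_a$, i.e. each player $i\in\mathcal V$ has action set $\{-1,+1\}$ and utility $$u_i(x)=\xi_i\sum_{j\in\mathcal N_i}x_ix_j,\qquad \xi_i=+1\text{ if } i\in\mathcal V_c,\ \xi_i=-1\text{ if } i\in\mathcal V_a.$$ If $\mathcal V_c$ is cohesive in $\mathcal G$, then $u$ admits a pure strategy Nash equilibrium (in fact at least two).
   Context: $\mathcal N_i=\{j\in\mathcal V:\{i,j\}\in\mathcal E\}$ is the neighborhood of $i$. A pure strategy Nash equilibrium is a profile $x^*\in\{-1,+1\}^{\mathcal V}$ such that $u_i(x^* )\ge u_i(y)$ for every player $i$ and every profile $y$ differing from $x^*$ only in entry $i$. A subset $\mathcal R\subseteq\mathcal V$ is cohesive in $\mathcal G$ if, with $\mathcal S=\mathcal V\setminus\mathcal R$, every $i\in\mathcal R$ satisfies $|\mathcal N_i\cap\mathcal R|\ge|\mathcal N_i\cap\mathcal S|$. *)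

(* Defs.v *)
From mathcomp Require Import all_boot all_order all_algebra.
Set Implicit Arguments. Unset Strict Implicit. Unset Printing Implicit Defensive.
Import Order.TTheory GRing.Theory Num.Theory.
Local Open Scope ring_scope.

Definition simple_graph (V : finType) (e : rel V) : Prop :=
  symmetric e /\ irreflexive e.

Definition nbhd (V : finType) (e : rel V) (i : V) : {set V} := [set j | e i j].

Definition cohesive (V : finType) (e : rel V) (R : {set V}) : Prop :=
  forall i, i \in R -> (#|nbhd e i :&: ~: R| <= #|nbhd e i :&: R|)%N.

Definition profile (V : finType) (x : V -> int) : Prop :=
  forall i, x i = 1 \/ x i = -1.

Definition xi (V : finType) (Vc : {set V}) (i : V) : int :=
  if i \in Vc then 1 else -1.

Definition util (V : finType) (e : rel V) (Vc : {set V}) (i : V) (x : V -> int) : int :=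
  xi Vc i * \sum_(j in nbhd e i) x i * x j.

Definition nash (V : finType) (e : rel V) (Vc : {set V}) (x : V -> int) : Prop :=
  profile x /\
  forall i (y : V -> int), profile y -> (forall j, j != i -> y j = x j) ->
    util e Vc i y <= util e Vc i x.

(* Main.v *)
Require Import Defs.
From mathcomp Require Import all_boot all_order all_algebra.
Set Implicit Arguments. Unset Strict Implicit. Unset Printing Implicit Defensive.
Import Order.TTheory GRing.Theory Num.Theory.
Local Open Scope ring_scope.

Section S.
Variables (V : finType) (e : rel V) (Vc : {set V}).
Hypothesis esym : symmetric e.
Hypothesis eirr : irreflexive e.

Definition Ssum (x : V -> int) i := \sum_(j in nbhd e i) x j.

Definition crit (x : V -> int) :=
  profile x /\ forall i, 0 <= xi Vc i * (x i * Ssum x i).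

Lemma util_eq x i : util e Vc i x = xi Vc i * (x i * Ssum x i).
Proof. by rewrite /util /Ssum; congr (_ * _); rewrite mulr_sumr. Qed.

Lemma crit_nash x : crit x -> nash e Vc x.
Proof.
move=> [px H]; split=> // i y py hy.
have Sy : Ssum y i = Ssum x i.
  apply: eq_bigr => j; rewrite inE => hj; apply: hy.
  by apply/eqP => ji; move: hj; rewrite ji eirr.
have Hi := H i.
rewrite !util_eq Sy.
have [->|->] : y i = x i \/ y i = - x i.
  by case: (py i) => ->; case: (px i) => ->; auto.
  by [].
rewrite mulNr mulrN; apply: (le_trans (y := 0)) => //; by rewrite oppr_le0.
Qed.

Lemma crit_neg x : crit x -> crit (fun v => - x v).
Proof.
move=> [px H]; split.
  by move=> i; case: (px i) => ->; [right|left]; rewrite ?opprK.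
move=> i; rewrite /Ssum sumrN mulrNN; exact: H.
Qed.

Definition sg (b : bool) : int := if b then 1 else -1.
Definition xof (f : {ffun V -> bool}) : V -> int := fun v => sg (f v).
Definition d (f : {ffun V -> bool}) a b : nat := e a b && (f a != f b).
Definition pot f : nat := (\sum_a \sum_b d f a b)%N.
Definition flip (f : {ffun V -> bool}) i : {ffun V -> bool} :=
  [ffun v => if v == i then ~~ f v else f v].
Definition adm (f : {ffun V -> bool}) := [forall v in Vc, f v].

Lemma dec (F : V -> V -> nat) i :
  (\sum_a \sum_b F a b = \sum_b F i b + \sum_(a | a != i) F a i +
     \sum_(a | a != i) \sum_(b | b != i) F a b)%N.
Proof.
rewrite (bigD1 i) //= -addnA; congr (_ + _).
rewrite -big_split; apply: eq_bigr => a _; by rewrite (bigD1 i).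
Qed.

Lemma pot_dec f i : (pot f = 2 * (\sum_b d f i b) +
     \sum_(a | a != i) \sum_(b | b != i) d f a b)%N.
Proof.
rewrite /pot (dec _ i); congr (_ + _).
have -> : (\sum_(a | a != i) d f a i = \sum_b d f i b)%N.
  transitivity (d f i i + \sum_(a | a != i) d f i a)%N; last by rewrite [RHS](bigD1 i).
  rewrite {2}/d eqxx andbF add0n.
  by apply: eq_bigr => a _; rewrite /d esym eq_sym.
by rewrite mul2n -addnn.
Qed.

Lemma pot_flip f i : (pot (flip f i) = 2 * (\sum_b (e i b && (f i == f b) : nat)) +
     \sum_(a | a != i) \sum_(b | b != i) d f a b)%N.
Proof.
rewrite (pot_dec _ i); congr (_ + _).
  congr (_ * _)%N; apply: eq_bigr => b _; rewrite /d /flip !ffunE eqxx.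
  case: (eqVneq b i) => [->|bi]; first by rewrite eirr.
  by case: (f i); case: (f b).
apply: eq_bigr => a ai; apply: eq_bigr => b bi.
by rewrite /d /flip !ffunE (negPf ai) (negPf bi).
Qed.

Lemma xS f i : xof f i * Ssum (xof f) i =
  (\sum_b (e i b && (f i == f b) : nat))%N%:R - (\sum_b d f i b)%N%:R.
Proof.
rewrite /Ssum mulr_sumr big_mkcond /= !natr_sum -sumrB.
apply: eq_bigr => b _; rewrite inE /d /xof /sg.
by case: (e i b); case: (f i); case: (f b).
Qed.

Hypothesis coh : cohesive e Vc.

Definition f0 : {ffun V -> bool} := [ffun => true].

Lemma adm0 : adm f0.
Proof. by apply/forallP => v; apply/implyP; rewrite ffunE. Qed.

Lemma crit_max : exists f, crit (xof f).
Proof.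
case: (@arg_maxnP _ f0 adm pot adm0) => f af fmax.
exists f; split.
  by move=> i; rewrite /xof /sg; case: (f i); [left|right].
move=> i; rewrite /xi; case: ifP => hi.
  have fi : f i = true by move/forallP: af => /(_ i) /implyP; apply.
  rewrite mul1r {1}/xof /sg fi mul1r /Ssum (big_setID Vc) /= setDE.
  have E1 : \sum_(j in nbhd e i :&: Vc) xof f j = (#|nbhd e i :&: Vc|)%:R.
    rewrite -sumr_const; apply: eq_bigr => j; rewrite inE => /andP [_ hj].
    by move/forallP: af => /(_ j) /implyP /(_ hj); rewrite /xof => ->.
  have E2 : - (#|nbhd e i :&: ~: Vc|)%:R <= \sum_(j in nbhd e i :&: ~: Vc) xof f j.
    rewrite -sumr_const -sumrN; apply: ler_sum => j _; rewrite /xof /sg.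
    by case: (f j).
  rewrite E1; apply: (le_trans _ (lerD (lexx _) E2)).
  rewrite subr_ge0 ler_nat; exact: coh.
have ag : adm (flip f i).
  apply/forallP => v; apply/implyP => hv; rewrite /flip ffunE.
  case: (eqVneq v i) => [vi|_]; first by move: hv; rewrite vi hi.
  by move/forallP: af => /(_ v) /implyP; apply.
have Hp : (pot (flip f i) <= pot f)%N := fmax _ ag.
move: Hp; rewrite pot_flip (pot_dec f i) leq_add2r leq_pmul2l // => Hle.
rewrite mulN1r oppr_ge0 xS subr_le0 ler_nat //.
Qed.

End S.

Theorem corollary1 (V : finType) (e : rel V) (Vc : {set V}) :
  simple_graph e -> cohesive e Vc ->
  (exists x : V -> int, nash e Vc x) /\
  ((0 < #|V|)%N ->
     exists x1 x2 : V -> int, [/\ nash e Vc x1, nash e Vc x2 & exists i, x1 i != x2 i]).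
Proof.
move=> [es ei] coh.
have [f cf] := crit_max es ei coh.
split; first by exists (xof f); exact: crit_nash.
move=> /card_gt0P [i _].
exists (xof f), (fun v => - xof f v); split.
- exact: crit_nash.
- exact: crit_nash (crit_neg cf).
- by exists i; rewrite /xof /sg; case: (f i).
Qed.
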